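(* Let $h>0$, assume $g$ satisfies (H), fix $c>0$, and let $\phi,\psi$ be two wavefront profiles of (1) with velocity $c$. Suppose that, as $t\to-\infty$, $\phi(t)=a(-t)^m e^{\lambda t}(1+o(1))$ and $\psi(t)=b(-t)^n e^{\mu t}(1+o(1))$ with $a,b>0$, $\lambda,\mu>0$ and $m,n\in\{0,1\}$. Then $\lambda=\mu$ and $m=n$.
   Context: Hypothesis (H): $g:\mathbb{R}_+\to\mathbb{R}_+$ is continuous and strictly increasing; $g(x)=x$ has exactly two nonnegative solutions $0$ and $\kappa>0$; $g$ is differentiable at $0,\kappa$ with $g'(0)>1$, $g'(\kappa)<1$; $g$ is $C^1$ near $\kappa$; and $|g(u)/u-g'(0)|\le Cu^\theta$ for $u\in(0,\delta]$ for some $C>0,\theta\in(0,1],\delta>0$. A wavefront profile with velocity $c$ is a $C^2$, positive, bounded, monotone $\phi:\mathbb{R}\to\mathbb{R}$ with $\phi(-\infty)=0$, $\phi(+\infty)=\kappa$ and $\phi''(s)-c\phi'(s)-\phi(s)+g(\phi(s-ch))=0$, $s\in\mathbb{R}$. *)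

(* Defs.v *)
From Stdlib Require Import Reals.
Open Scope R_scope.

(* Hypothesis (H) on g : R_+ -> R_+, with positive equilibrium kappa.
   g is given as a total function R -> R; only its values on [0,+oo) matter. *)
Definition hypH (g : R -> R) (kappa : R) : Prop :=
  0 < kappa /\
  (forall x, 0 <= x -> 0 <= g x) /\
  (forall x, 0 <= x -> forall eps, 0 < eps -> exists del, 0 < del /\
      forall y, 0 <= y -> Rabs (y - x) < del -> Rabs (g y - g x) < eps) /\
  (forall x y, 0 <= x -> x < y -> g x < g y) /\
  (forall x, 0 <= x -> (g x = x <-> (x = 0 \/ x = kappa))) /\
  exists d0 dk : R,
    (forall eps, 0 < eps -> exists del, 0 < del /\
       forall u, 0 < u -> u < del -> Rabs ((g u - g 0) / u - d0) < eps) /\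
    1 < d0 /\
    derivable_pt_lim g kappa dk /\ dk < 1 /\
    (exists r (g1 : R -> R), 0 < r /\
       (forall x, kappa - r < x < kappa + r -> derivable_pt_lim g x (g1 x)) /\
       (forall x, kappa - r < x < kappa + r -> continuity_pt g1 x)) /\
    (exists C theta delta, 0 < C /\ 0 < theta <= 1 /\ 0 < delta /\
       forall u, 0 < u <= delta -> Rabs (g u / u - d0) <= C * Rpower u theta).

Definition wavefront (g : R -> R) (kappa h c : R) (phi : R -> R) : Prop :=
  exists phi1 phi2 : R -> R,
    (forall s, derivable_pt_lim phi s (phi1 s)) /\
    (forall s, derivable_pt_lim phi1 s (phi2 s)) /\
    continuity phi2 /\
    (forall s, 0 < phi s) /\
    (exists B, forall s, Rabs (phi s) <= B) /\
    ((forall x y, x <= y -> phi x <= phi y) \/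
     (forall x y, x <= y -> phi y <= phi x)) /\
    (forall eps, 0 < eps -> exists M, forall s, s <= M -> Rabs (phi s) < eps) /\
    (forall eps, 0 < eps -> exists M, forall s, M <= s -> Rabs (phi s - kappa) < eps) /\
    (forall s, phi2 s - c * phi1 s - phi s + g (phi (s - c * h)) = 0).

Definition asympt_minus_infty (f : R -> R) (a lam : R) (m : nat) : Prop :=
  forall eps, 0 < eps -> exists M, forall t, t <= M ->
    Rabs (f t / (a * (- t) ^ m * exp (lam * t)) - 1) < eps.

(* Main.v *)
Require Import Defs.
From Stdlib Require Import Reals Lra Classical.
Open Scope R_scope.

Lemma deriv_pos_left f x L : derivable_pt_lim f x L -> 0 < L ->
  exists d, 0 < d /\ forall y, x - d < y < x -> f y < f x.
Proof.
  intros H HL. destruct (H L HL) as [del Hd].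
  exists (pos del). split; [apply cond_pos|]. intros y Hy.
  assert (Hh := Hd (y - x) ltac:(lra) ltac:(rewrite Rabs_left; lra)).
  replace (x + (y - x)) with y in Hh by ring.
  apply Rabs_def2 in Hh. destruct Hh as [_ Hh].
  assert (0 < (f y - f x) / (y - x)) by lra.
  destruct (Rlt_or_le (f y) (f x)) as [|Hc]; auto.
  exfalso. assert (Hq : (f y - f x) / (y - x) * (y - x) = f y - f x) by (field; lra).
  set (q := (f y - f x) / (y - x)) in *. nra.
Qed.

Lemma deriv_neg_right f x L : derivable_pt_lim f x L -> L < 0 ->
  exists d, 0 < d /\ forall y, x < y < x + d -> f y < f x.
Proof.
  intros H HL. destruct (H (-L) ltac:(lra)) as [del Hd].
  exists (pos del). split; [apply cond_pos|]. intros y Hy.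
  assert (Hh := Hd (y - x) ltac:(lra) ltac:(rewrite Rabs_right; lra)).
  replace (x + (y - x)) with y in Hh by ring.
  apply Rabs_def2 in Hh. destruct Hh as [Hh _].
  assert ((f y - f x) / (y - x) < 0) by lra.
  destruct (Rlt_or_le (f y) (f x)) as [|Hc]; auto.
  exfalso. assert (Hq : (f y - f x) / (y - x) * (y - x) = f y - f x) by (field; lra).
  set (q := (f y - f x) / (y - x)) in *. nra.
Qed.

Lemma deriv_opp f x L : derivable_pt_lim f x L -> derivable_pt_lim (fun y => - f y) x (- L).
Proof.
  intros H. apply (derivable_pt_lim_opp f x L H).
Qed.

Lemma deriv_pos_right f x L : derivable_pt_lim f x L -> 0 < L ->
  exists d, 0 < d /\ forall y, x < y < x + d -> f x < f y.
Proof.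
  intros H HL. destruct (deriv_neg_right (fun y => - f y) x (-L) (deriv_opp f x L H) ltac:(lra))
   as [d [Hd H2]]. exists d. split; auto. intros y Hy. specialize (H2 y Hy). lra.
Qed.

Lemma deriv_neg_left f x L : derivable_pt_lim f x L -> L < 0 ->
  exists d, 0 < d /\ forall y, x - d < y < x -> f x < f y.
Proof.
  intros H HL. destruct (deriv_pos_left (fun y => - f y) x (-L) (deriv_opp f x L H) ltac:(lra))
   as [d [Hd H2]]. exists d. split; auto. intros y Hy. specialize (H2 y Hy). lra.
Qed.

Lemma min_deriv f f1 f2 x r : 0 < r ->
  (forall y, x - r < y < x + r -> f x <= f y) ->
  (forall y, derivable_pt_lim f y (f1 y)) ->
  derivable_pt_lim f1 x f2 -> f1 x = 0 /\ 0 <= f2.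
Proof.
  intros Hr Hmin Hf Hf1.
  assert (E : f1 x = 0).
  { destruct (Rtotal_order (f1 x) 0) as [Hl|[He|Hg]]; auto.
    - destruct (deriv_neg_right f x _ (Hf x) Hl) as [d [Hd H]].
      specialize (H (x + Rmin d r / 2)). specialize (Hmin (x + Rmin d r / 2)).
      unfold Rmin in *; destruct Rle_dec; specialize (H ltac:(lra)); specialize (Hmin ltac:(lra)); lra.
    - destruct (deriv_pos_left f x _ (Hf x) Hg) as [d [Hd H]].
      specialize (H (x - Rmin d r / 2)). specialize (Hmin (x - Rmin d r / 2)).
      unfold Rmin in *; destruct Rle_dec; specialize (H ltac:(lra)); specialize (Hmin ltac:(lra)); lra. }
  split; auto.
  destruct (Rle_or_lt 0 f2) as [|Hl]; auto. exfalso.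
  destruct (deriv_neg_right f1 x _ Hf1 Hl) as [d [Hd H]].
  set (y := x + Rmin d r / 2).
  assert (Hy : x < y < x + d /\ y < x + r) by (unfold y, Rmin; destruct Rle_dec; lra).
  destruct (MVT_cor2 f f1 x y ltac:(lra) (fun c _ => Hf c)) as [z [Hz1 Hz2]].
  specialize (H z ltac:(lra)). specialize (Hmin y ltac:(lra)).
  rewrite E in H. assert (f1 z * (y - x) < 0). { apply Rmult_neg_pos; lra. } lra.
Qed.

Lemma back_prop (P : R -> Prop) d : 0 < d -> (forall s, P s -> P (s - d)) ->
  (exists S, forall s, s <= S -> ~ P s) -> forall s, ~ P s.
Proof.
  intros Hd Hstep [S HS] s Ps.
  assert (Hn : forall n, P (s - INR n * d)).
  { induction n. - simpl. replace (s - 0 * d) with s by ring. auto.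
    - rewrite S_INR. replace (s - (INR n + 1) * d) with ((s - INR n * d) - d) by ring. auto. }
  destruct (INR_archimed d (s - S) Hd) as [n Hn2].
  apply (HS (s - INR n * d)); [lra | apply Hn].
Qed.

Lemma wf_incr g kappa h c phi : wavefront g kappa h c phi ->
  forall x y, x <= y -> phi x <= phi y.
Proof.
  intros (p1 & p2 & _ & _ & _ & Hpos & _ & Hmon & Hm & _ & _).
  destruct Hmon as [Hmon|Hmon]; auto. exfalso.
  destruct (Hm (phi 0) (Hpos 0)) as [M HM].
  specialize (HM (Rmin M 0) (Rmin_l _ _)). specialize (Hmon (Rmin M 0) 0 (Rmin_r _ _)).
  specialize (Hpos (Rmin M 0)). rewrite Rabs_right in HM; lra.
Qed.

Lemma wf_le_kappa g kappa h c phi : wavefront g kappa h c phi ->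
  forall x, phi x <= kappa.
Proof.
  intros W x. pose proof (wf_incr _ _ _ _ _ W) as Hi.
  destruct W as (p1 & p2 & _ & _ & _ & Hpos & _ & _ & _ & Hp & _).
  destruct (Rle_or_lt (phi x) kappa) as [|Hl]; auto. exfalso.
  destruct (Hp (phi x - kappa) ltac:(lra)) as [M HM].
  specialize (HM (Rmax M x) (Rmax_l _ _)). specialize (Hi x (Rmax M x) (Rmax_r _ _)).
  rewrite Rabs_right in HM; lra.
Qed.

Lemma wf_continuous g kappa h c phi : wavefront g kappa h c phi -> forall x, continuity_pt phi x.
Proof.
  intros (p1 & p2 & Hd & _). intros x. apply derivable_continuous_pt. exists (p1 x). apply Hd.
Qed.

Lemma shift_deriv f s t l : derivable_pt_lim f (s + t) l -> derivable_pt_lim (fun x => f (x + t)) s l.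
Proof.
  intros H eps He. destruct (H eps He) as [d Hd]. exists d. intros hh H1 H2.
  replace (s + hh + t) with (s + t + hh) by ring. auto.
Qed.

(* second-order info at a minimum of phi(.+tau) - psi *)
Lemma wf_min_eq g kappa h c phi psi tau x r :
  wavefront g kappa h c phi -> wavefront g kappa h c psi -> 0 < r ->
  (forall y, x - r < y < x + r -> phi (x + tau) - psi x <= phi (y + tau) - psi y) ->
  phi (x + tau) - psi x >= g (phi (x - c * h + tau)) - g (psi (x - c * h)).
Proof.
  intros W1 W2 Hr Hmin.
  destruct W1 as (p1 & p2 & Hd1 & Hd2 & _ & _ & _ & _ & _ & _ & Heq1).
  destruct W2 as (q1 & q2 & Ed1 & Ed2 & _ & _ & _ & _ & _ & _ & Eeq2).
  set (w := fun y => phi (y + tau) - psi y).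
  set (w1 := fun y => p1 (y + tau) - q1 y).
  assert (Dw : forall y, derivable_pt_lim w y (w1 y)).
  { intros y. unfold w, w1. apply (derivable_pt_lim_minus (fun y => phi (y + tau)) psi).
    - apply shift_deriv. apply Hd1. - apply Ed1. }
  assert (Dw1 : derivable_pt_lim w1 x (p2 (x + tau) - q2 x)).
  { unfold w1. apply (derivable_pt_lim_minus (fun y => p1 (y + tau)) q1).
    - apply shift_deriv. apply Hd2. - apply Ed2. }
  destruct (min_deriv w w1 _ x r Hr Hmin Dw Dw1) as [E1 E2].
  unfold w1 in E1.
  specialize (Heq1 (x + tau)). specialize (Eeq2 x).
  replace (x + tau - c * h) with (x - c * h + tau) in Heq1 by ring.
  nra.
Qed.

Lemma hyp_gk g kappa : hypH g kappa -> g kappa = kappa.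
Proof.
  intros (Hk & _ & _ & _ & Hfix & _). apply (Hfix kappa ltac:(lra)). right; auto.
Qed.

Lemma wf_lt_kappa g kappa h c phi : 0 < h -> 0 < c -> hypH g kappa -> wavefront g kappa h c phi ->
  forall x, phi x < kappa.
Proof.
  intros Hh Hc HH W.
  pose proof (wf_le_kappa _ _ _ _ _ W) as Hle.
  pose proof (hyp_gk _ _ HH) as Gk.
  destruct HH as (Hk & _ & _ & Hinc & _).
  assert (Hn : forall x, ~ phi x = kappa).
  { apply (back_prop (fun x => phi x = kappa) (c * h) ltac:(nra)).
    - intros x Ex.
      destruct W as (p1 & p2 & Hd1 & Hd2 & _ & Hpos & _ & _ & _ & _ & Heq1).
      destruct (min_deriv (fun y => - phi y) (fun y => - p1 y) (- p2 x) x 1 ltac:(lra))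
        as [E1 E2].
      + intros y _. specialize (Hle y). lra.
      + intros y. apply derivable_pt_lim_opp. apply Hd1.
      + apply derivable_pt_lim_opp. apply Hd2.
      + specialize (Heq1 x). specialize (Hle (x - c * h)).
        destruct Hle as [Hl|]; auto.
        specialize (Hinc _ _ (Rlt_le _ _ (Hpos (x - c * h))) Hl). cbv beta in E1. assert (p1 x = 0) by lra. rewrite H in Heq1. lra.
    - destruct W as (p1 & p2 & _ & _ & _ & _ & _ & _ & Hm & _).
      destruct (Hm kappa Hk) as [M HM]. exists M. intros s Hs E.
      specialize (HM s Hs). rewrite E, Rabs_right in HM; lra. }
  intros x. destruct (Hle x); auto. exfalso; apply (Hn x); auto.
Qed.

Lemma hyp_contr g kappa : hypH g kappa -> exists r q, 0 < r /\ 0 <= q < 1 /\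
  forall A B, kappa - r < A -> A < B -> B <= kappa -> g B - g A <= q * (B - A).
Proof.
  intros (Hk & _ & _ & _ & _ & d0 & dk & _ & _ & Hdk & Hdk1 & [r [g1 [Hr [Hg1 Hc1]]]] & _).
  assert (E : g1 kappa = dk).
  { apply (uniqueness_limite g kappa). apply Hg1; lra. auto. }
  specialize (Hc1 kappa ltac:(lra)).
  destruct (Hc1 ((1 - dk)/2) ltac:(lra)) as [alp [Halp Hal]].
  exists (Rmin r alp), (Rmax 0 ((1 + dk)/2)). split; [apply Rmin_pos; lra|].
  split. { split. apply Rmax_l. apply Rmax_lub_lt; lra. }
  intros A B HA HAB HB.
  assert (Hr1 := Rmin_l r alp). assert (Hr2 := Rmin_r r alp).
  destruct (MVT_cor2 g g1 A B HAB) as [xi [Exi Hxi]].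
  { intros y Hy. apply Hg1. lra. }
  assert (g1 xi <= Rmax 0 ((1 + dk)/2)).
  { destruct (Req_dec xi kappa) as [->|Hne].
    - rewrite E. apply Rle_trans with ((1+dk)/2); [lra|apply Rmax_r].
    - specialize (Hal xi). simpl in Hal. unfold R_dist in Hal.
      assert (Habs : Rabs (xi - kappa) < alp) by (rewrite Rabs_left; lra).
      specialize (Hal (conj (conj I (not_eq_sym Hne)) Habs)).
      apply Rabs_def2 in Hal. rewrite E in Hal.
      apply Rle_trans with ((1+dk)/2); [lra|apply Rmax_r]. }
  rewrite Exi. apply Rmult_le_compat_r; lra.
Qed.

Lemma w_deriv g kappa h c phi psi tau : wavefront g kappa h c phi -> wavefront g kappa h c psi ->
  forall x, continuity_pt (fun y => phi (y + tau) - psi y) x.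
Proof.
  intros W1 W2 x.
  destruct W1 as (p1 & p2 & Hd1 & _). destruct W2 as (q1 & q2 & Ed1 & _).
  apply derivable_continuous_pt.
  exists (p1 (x + tau) - q1 x).
  apply (derivable_pt_lim_minus (fun y => phi (y + tau)) psi).
  apply shift_deriv; auto. auto.
Qed.

Lemma kappa_lemma g kappa h c phi psi tau S r q :
  hypH g kappa -> wavefront g kappa h c phi -> wavefront g kappa h c psi ->
  0 <= q < 1 ->
  (forall A B, kappa - r < A -> A < B -> B <= kappa -> g B - g A <= q * (B - A)) ->
  (forall s, S - c * h <= s -> kappa - r < phi (s + tau) /\ kappa - r < psi s) ->
  0 < c * h ->
  (forall s, S - c * h <= s <= S -> psi s <= phi (s + tau)) ->
  forall s, S - c * h <= s -> psi s <= phi (s + tau).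
Proof.
  intros HH W1 W2 Hq Hcon Hnear Hch H0 s' Hs'.
  set (w := fun y => phi (y + tau) - psi y).
  destruct (Rle_or_lt 0 (w s')) as [|Hneg]; [unfold w in *; lra|]. exfalso.
  set (m0 := w s') in *.
  assert (HR : exists R, forall y, R <= y -> m0 < w y).
  { destruct W1 as (_ & _ & _ & _ & _ & _ & _ & _ & _ & Hl1 & _).
    destruct W2 as (_ & _ & _ & _ & _ & _ & _ & _ & _ & Hl2 & _).
    destruct (Hl1 (- m0 / 2) ltac:(lra)) as [M1 HM1].
    destruct (Hl2 (- m0 / 2) ltac:(lra)) as [M2 HM2].
    exists (Rmax (M1 - tau) M2). intros y Hy.
    assert (Ha := Rmax_l (M1 - tau) M2). assert (Hb := Rmax_r (M1 - tau) M2).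
    specialize (HM1 (y + tau) ltac:(lra)). specialize (HM2 y ltac:(lra)).
    apply Rabs_def2 in HM1. apply Rabs_def2 in HM2. unfold w. lra. }
  destruct HR as [R HR].
  assert (HR1 := Rmax_l R s'). assert (HR2 := Rmax_r R s').
  set (R' := Rmax R s') in *.
  destruct (continuity_ab_min w (S - c * h) R' ltac:(lra)) as [s1 [Hmin Hs1]].
  { intros y _. apply (w_deriv g kappa h c phi psi tau W1 W2). }
  assert (Hle : w s1 <= m0) by (apply Hmin; lra).
  assert (Hs1R : s1 < R). { destruct (Rlt_or_le s1 R) as [|Hc]; auto. specialize (HR s1 Hc). lra. }
  assert (Hs1S : S < s1).
  { destruct (Rlt_or_le S s1) as [|Hc]; auto. specialize (H0 s1 ltac:(lra)). unfold w in Hle. lra. }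
  assert (Hglob : forall y, S - c * h <= y -> w s1 <= w y).
  { intros y Hy. destruct (Rle_or_lt y R') as [Hy2|Hy2].
    - apply Hmin; lra.
    - specialize (HR y ltac:(unfold R' in *; lra)). lra. }
  assert (Hge := wf_min_eq g kappa h c phi psi tau s1 (Rmin (s1 - S) (R - s1)) W1 W2
     ltac:(apply Rmin_pos; lra)).
  specialize (Hge ltac:(intros y Hy; assert (Rmin (s1 - S) (R - s1) <= s1 - S) by apply Rmin_l;
    assert (Rmin (s1 - S) (R - s1) <= R - s1) by apply Rmin_r; apply Hglob; lra)).
  specialize (Hglob (s1 - c * h) ltac:(lra)).
  destruct (Hnear (s1 - c * h) ltac:(lra)) as [HA HB].
  assert (Bk := wf_le_kappa _ _ _ _ _ W2 (s1 - c * h)).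
  destruct HH as (_ & Hpos & _ & Hinc & _).
  assert (Ppos : 0 < phi (s1 - c * h + tau)) by (destruct W1 as (_&_&_&_&_&P&_); apply P).
  assert (Qpos : 0 < psi (s1 - c * h)) by (destruct W2 as (_&_&_&_&_&P&_); apply P).
  unfold w in *.
  set (A := phi (s1 - c * h + tau)) in *. set (B := psi (s1 - c * h)) in *.
  destruct (Rlt_or_le A B) as [HAB|HAB].
  - specialize (Hcon A B HA HAB Bk). nra.
  - destruct HAB as [HAB|HAB].
    + specialize (Hinc B A ltac:(lra) HAB). lra.
    + rewrite HAB in Hge. lra.
Qed.

Definition TT (phi psi : R -> R) tau := forall s, psi s <= phi (s + tau).

Lemma touch g kappa h c phi psi tau : 0 < h -> 0 < c -> hypH g kappa ->
  wavefront g kappa h c phi -> wavefront g kappa h c psi ->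
  (forall sig, exists S, forall s, s <= S -> psi s < phi (s + sig)) ->
  TT phi psi tau -> forall s, psi s < phi (s + tau).
Proof.
  intros Hh Hc HH W1 W2 Hf HT.
  assert (Hn : forall s, ~ (phi (s + tau) = psi s)).
  { apply (back_prop (fun s => phi (s + tau) = psi s) (c * h) ltac:(nra)).
    - intros s Es.
      assert (Hge := wf_min_eq g kappa h c phi psi tau s 1 W1 W2 ltac:(lra)).
      specialize (Hge ltac:(intros y _; specialize (HT y); lra)).
      specialize (HT (s - c * h)).
      destruct HH as (_ & _ & _ & Hinc & _).
      assert (Qpos : 0 < psi (s - c * h)) by (destruct W2 as (_&_&_&_&_&P&_); apply P).
      destruct HT as [HT|HT]; [|auto].
      specialize (Hinc _ _ (Rlt_le _ _ Qpos) HT).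
      replace (s - c * h + tau) with (s - c * h + tau) in * by ring. lra.
    - destruct (Hf tau) as [S HS]. exists S. intros s Hs E. specialize (HS s Hs). lra. }
  intros s. destruct (HT s); auto. exfalso. apply (Hn s). auto.
Qed.

Lemma near_kappa g kappa h c phi r : wavefront g kappa h c phi -> 0 < r ->
  exists S, forall x, S <= x -> kappa - r < phi x.
Proof.
  intros (_ & _ & _ & _ & _ & _ & _ & _ & _ & Hl & _) Hr.
  destruct (Hl r Hr) as [M HM]. exists M. intros x Hx. specialize (HM x Hx).
  apply Rabs_def2 in HM. lra.
Qed.

Lemma step g kappa h c phi psi tau : 0 < h -> 0 < c -> hypH g kappa ->
  wavefront g kappa h c phi -> wavefront g kappa h c psi ->
  (forall sig, exists S, forall s, s <= S -> psi s < phi (s + sig)) ->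
  TT phi psi tau -> exists eps, 0 < eps /\ TT phi psi (tau - eps).
Proof.
  intros Hh Hc HH W1 W2 Hf HT.
  assert (Hch : 0 < c * h) by nra.
  assert (Hpos := touch g kappa h c phi psi tau Hh Hc HH W1 W2 Hf HT).
  destruct (hyp_contr g kappa HH) as [r [q [Hr [Hq Hcon]]]].
  destruct (near_kappa _ _ _ _ _ r W1 Hr) as [Sp HSp].
  destruct (near_kappa _ _ _ _ _ r W2 Hr) as [Sq HSq].
  destruct (Hf (tau - 1)) as [S1 HS1].
  set (S2 := Rmax (S1 + c * h) (Rmax (Sq + c * h) (Sp + c * h - tau + 1))).
  assert (H21 : S1 + c * h <= S2) by apply Rmax_l.
  assert (H22 : Sq + c * h <= S2) by (eapply Rle_trans; [|apply Rmax_r]; apply Rmax_l).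
  assert (H23 : Sp + c * h - tau + 1 <= S2) by (eapply Rle_trans; [|apply Rmax_r]; apply Rmax_r).
  clearbody S2.
  set (w := fun y => phi (y + tau) - psi y).
  destruct (continuity_ab_min w S1 S2 ltac:(lra)) as [smin [Hmin Hsmin]].
  { intros y _. apply (w_deriv g kappa h c phi psi tau W1 W2). }
  set (del := w smin).
  assert (Hdel : 0 < del) by (unfold del, w; specialize (Hpos smin); lra).
  pose proof W1 as W1'.
  destruct W1' as (p1 & p2 & Hd1 & Hd2 & _).
  destruct (continuity_ab_maj p1 (S1 + tau - 1) (S2 + tau) ltac:(lra)) as [bx [Hmax Hbx]].
  { intros y _. apply derivable_continuous_pt. exists (p2 y). apply Hd2. }
  set (Bd := Rabs (p1 bx) + 1).
  assert (HBd : 0 < Bd) by (unfold Bd; pose proof (Rabs_pos (p1 bx)); lra).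
  set (eps := Rmin 1 (del / Bd)).
  assert (He1 : eps <= 1) by apply Rmin_l.
  assert (He2 : eps <= del / Bd) by apply Rmin_r.
  assert (He0 : 0 < eps) by (apply Rmin_pos; [lra | apply Rdiv_lt_0_compat; lra]).
  exists eps. split; auto.
  assert (Hinc := wf_incr _ _ _ _ _ W1).
  assert (Hmid : forall s, S1 <= s <= S2 -> psi s <= phi (s + (tau - eps))).
  { intros s Hs.
    destruct (MVT_cor2 phi p1 (s + tau - eps) (s + tau) ltac:(lra) (fun c _ => Hd1 c)) as [xi [Exi Hxi]].
    assert (p1 xi <= p1 bx) by (apply Hmax; lra).
    assert (p1 bx <= Rabs (p1 bx)) by apply Rle_abs.
    assert (Bd * eps <= del).
    { apply Rmult_le_reg_r with (/ Bd). apply Rinv_0_lt_compat; lra.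
      replace (Bd * eps * / Bd) with eps by (field; lra). exact He2. }
    assert (del <= w s) by (apply Hmin; lra).
    unfold w in *. replace (s + (tau - eps)) with (s + tau - eps) by ring.
    replace (s + tau - (s + tau - eps)) with eps in Exi by ring.
    unfold Bd in *. nra. }
  intros s.
  destruct (Rle_or_lt s S1) as [Hs|Hs].
  - specialize (HS1 s Hs). specialize (Hinc (s + (tau - 1)) (s + (tau - eps)) ltac:(lra)). lra.
  - destruct (Rle_or_lt s S2) as [Hs2|Hs2]. { apply Hmid; lra. }
    apply (kappa_lemma g kappa h c phi psi (tau - eps) S2 r q HH W1 W2 Hq Hcon); try lra.
    + intros y Hy. split. apply HSp. lra. apply HSq. lra.
    + intros y Hy. apply Hmid. lra.
Qed.

Lemma large g kappa h c phi psi : 0 < h -> 0 < c -> hypH g kappa ->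
  wavefront g kappa h c phi -> wavefront g kappa h c psi ->
  (forall sig, exists S, forall s, s <= S -> psi s < phi (s + sig)) ->
  exists tau, TT phi psi tau.
Proof.
  intros Hh Hc HH W1 W2 Hf.
  assert (Hch : 0 < c * h) by nra.
  destruct (hyp_contr g kappa HH) as [r [q [Hr [Hq Hcon]]]].
  destruct (near_kappa _ _ _ _ _ r W1 Hr) as [Sp HSp].
  destruct (near_kappa _ _ _ _ _ r W2 Hr) as [Sq HSq].
  destruct (Hf 0) as [S1 HS1].
  set (S2 := Rmax (S1 + c * h) (Sq + c * h)).
  assert (H21 : S1 + c * h <= S2) by apply Rmax_l.
  assert (H22 : Sq + c * h <= S2) by apply Rmax_r.
  clearbody S2.
  assert (Hlt := wf_lt_kappa g kappa h c psi Hh Hc HH W2 S2).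
  destruct (near_kappa _ _ _ _ _ (kappa - psi S2) W1 ltac:(lra)) as [M HM].
  set (tau := Rmax 0 (Rmax (M - S1) (Sp - S2 + c * h))).
  assert (T0 : 0 <= tau) by apply Rmax_l.
  assert (T1 : M - S1 <= tau) by (eapply Rle_trans; [|apply Rmax_r]; apply Rmax_l).
  assert (T2 : Sp - S2 + c * h <= tau) by (eapply Rle_trans; [|apply Rmax_r]; apply Rmax_r).
  clearbody tau. exists tau.
  assert (Hinc1 := wf_incr _ _ _ _ _ W1). assert (Hinc2 := wf_incr _ _ _ _ _ W2).
  assert (Hlow : forall s, s <= S2 -> psi s <= phi (s + tau)).
  { intros s Hs. destruct (Rle_or_lt s S1) as [Hs1|Hs1].
    - specialize (HS1 s Hs1). specialize (Hinc1 (s + 0) (s + tau) ltac:(lra)). lra.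
    - specialize (Hinc2 s S2 Hs). specialize (HM (S1 + tau) ltac:(lra)).
      specialize (Hinc1 (S1 + tau) (s + tau) ltac:(lra)). lra. }
  intros s. destruct (Rle_or_lt s S2) as [Hs|Hs]. { auto. }
  apply (kappa_lemma g kappa h c phi psi tau S2 r q HH W1 W2 Hq Hcon); try lra.
  + intros y Hy. split. apply HSp. lra. apply HSq. lra.
  + intros y Hy. apply Hlow. lra.
Qed.

Lemma sliding g kappa h c phi psi : 0 < h -> 0 < c -> hypH g kappa ->
  wavefront g kappa h c phi -> wavefront g kappa h c psi ->
  (forall sig, exists S, forall s, s <= S -> psi s < phi (s + sig)) -> False.
Proof.
  intros Hh Hc HH W1 W2 Hf.
  assert (Hinc1 := wf_incr _ _ _ _ _ W1).
  assert (Hbad : exists tb, ~ TT phi psi tb).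
  { assert (Q0 : 0 < psi 0) by (destruct W2 as (_&_&_&_&_&P&_); apply P).
    destruct W1 as (_ & _ & _ & _ & _ & _ & _ & _ & Hm & _).
    destruct (Hm (psi 0) Q0) as [M HM]. exists M. intros HT.
    specialize (HT 0). specialize (HM (0 + M) ltac:(lra)).
    apply Rabs_def2 in HM. lra. }
  destruct Hbad as [tb Htb].
  set (Eset := fun x => TT phi psi (- x)).
  assert (Hub : forall x, Eset x -> x <= - tb).
  { intros x Ex. destruct (Rle_or_lt x (- tb)) as [|Hl]; auto. exfalso. apply Htb.
    intros s. specialize (Ex s). specialize (Hinc1 (s + - x) (s + tb) ltac:(lra)). lra. }
  destruct (large g kappa h c phi psi Hh Hc HH W1 W2 Hf) as [t0 Ht0].
  destruct (completeness Eset) as [m [Hm1 Hm2]].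
  { exists (- tb). intros x Ex. auto. }
  { exists (- t0). unfold Eset. rewrite Ropp_involutive. auto. }
  assert (Hstar : TT phi psi (- m)).
  { intros s. destruct (Rle_or_lt (psi s) (phi (s + - m))) as [|Hl]; auto. exfalso.
    pose proof (wf_continuous _ _ _ _ _ W1 (s + - m)) as Hcont.
    destruct (Hcont (psi s - phi (s + - m)) ltac:(lra)) as [eta [Heta Hclose]].
    destruct (classic (exists x, Eset x /\ m - eta < x)) as [[x [Ex Hx]]|Hno].
    - assert (x <= m) by (apply Hm1; auto).
      specialize (Ex s).
      destruct (Req_dec x m) as [->|Hne]; [lra|].
      specialize (Hclose (s + - x)). simpl in Hclose. unfold R_dist in Hclose.
      assert (Habs : Rabs (s + - x - (s + - m)) < eta) by (rewrite Rabs_right; lra).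
      assert (HD : D_x no_cond (s + - m) (s + - x)).
      { split. constructor. intro HE. apply Hne. lra. }
      specialize (Hclose (conj HD Habs)).
      apply Rabs_def2 in Hclose. lra.
    - assert (m <= m - eta); [|lra].
      apply Hm2. intros x Ex. destruct (Rle_or_lt x (m - eta)) as [|Hl2]; auto.
      exfalso. apply Hno. exists x. auto. }
  destruct (step g kappa h c phi psi (- m) Hh Hc HH W1 W2 Hf Hstar) as [eps [He HT]].
  assert (m + eps <= m); [|lra].
  apply Hm1. unfold Eset. replace (- (m + eps)) with (- m - eps) by ring. auto.
Qed.

Lemma asym_bounds f a lam m : asympt_minus_infty f a lam m -> 0 < a ->
  exists M, forall t, t <= M -> t <= -1 /\
    (1/2) * (a * (- t) ^ m * exp (lam * t)) < f t < (3/2) * (a * (- t) ^ m * exp (lam * t)).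
Proof.
  intros H Ha. destruct (H (1/2) ltac:(lra)) as [M HM].
  exists (Rmin M (-1)). intros t Ht.
  assert (Ht1 := Rle_trans _ _ _ Ht (Rmin_l M (-1))).
  assert (Ht2 := Rle_trans _ _ _ Ht (Rmin_r M (-1))).
  split; auto. specialize (HM t Ht1). apply Rabs_def2 in HM.
  set (D := a * (- t) ^ m * exp (lam * t)) in *.
  assert (HD : 0 < D).
  { unfold D. apply Rmult_lt_0_compat; [apply Rmult_lt_0_compat; auto|apply exp_pos].
    apply pow_lt. lra. }
  assert (E : f t / D * D = f t) by (field; lra).
  set (r := f t / D) in *. nra.
Qed.

Lemma exp_sq u d : 0 <= u -> 0 < d -> (d * u / 2) ^ 2 <= exp (d * u).
Proof.
  intros Hu Hd. replace (d * u) with (d * u / 2 + d * u / 2) at 2 by field.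
  rewrite exp_plus. assert (H := exp_ineq1_le (d * u / 2)).
  assert (0 <= d * u / 2) by (apply Rmult_le_pos; [apply Rmult_le_pos|]; lra).
  simpl. nra.
Qed.

Lemma faster phi psi a b lam mu m n : 0 < a -> 0 < b -> 0 < lam ->
  (m = 0%nat \/ m = 1%nat) -> (n = 0%nat \/ n = 1%nat) ->
  asympt_minus_infty phi a lam m -> asympt_minus_infty psi b mu n ->
  (lam < mu \/ (lam = mu /\ m = 1%nat /\ n = 0%nat)) ->
  forall sig, exists S, forall s, s <= S -> psi s < phi (s + sig).
Proof.
  intros Ha Hb Hl Hm Hn A1 A2 Hcase sig.
  destruct (asym_bounds _ _ _ _ A1 Ha) as [M1 HM1].
  destruct (asym_bounds _ _ _ _ A2 Hb) as [M2 HM2].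
  set (L := exp (lam * sig)). assert (HL : 0 < L) by apply exp_pos.
  set (K := a * L).
  assert (HK : 0 < K) by (unfold K; apply Rmult_lt_0_compat; lra).
  destruct Hcase as [Hlt | [Heq [-> ->]]].
  - set (d := mu - lam).
    assert (Hd : 0 < d) by (unfold d; lra).
    assert (Hd2 : 0 < K * d ^ 2) by (apply Rmult_lt_0_compat; [lra|apply pow_lt; lra]).
    set (q := 12 * b / (K * d ^ 2)).
    assert (Hq : q * (K * d ^ 2) = 12 * b) by (unfold q; field; lra).
    exists (Rmin (Rmin (M1 - sig) M2) (Rmin (-1 - Rabs sig) (- q))).
    intros s Hs.
    assert (R1 := Rmin_l (Rmin (M1 - sig) M2) (Rmin (-1 - Rabs sig) (- q))).
    assert (R2 := Rmin_r (Rmin (M1 - sig) M2) (Rmin (-1 - Rabs sig) (- q))).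
    assert (R3 := Rmin_l (M1 - sig) M2). assert (R4 := Rmin_r (M1 - sig) M2).
    assert (R5 := Rmin_l (-1 - Rabs sig) (- q)). assert (R6 := Rmin_r (-1 - Rabs sig) (- q)).
    destruct (HM1 (s + sig) ltac:(lra)) as [_ [P1 _]].
    destruct (HM2 s ltac:(lra)) as [_ [_ P2]].
    assert (Habs := Rle_abs sig). assert (Habs2 := Rle_abs (- sig)). rewrite Rabs_Ropp in Habs2.
    assert (Pm : 1 <= (- (s + sig)) ^ m) by (destruct Hm as [-> | ->]; simpl; lra).
    assert (Pn : (- s) ^ n <= - s) by (destruct Hn as [-> | ->]; simpl; lra).
    rewrite Rmult_plus_distr_l, exp_plus in P1. fold L in P1.
    replace (mu * s) with (lam * s + d * s) in P2 by (unfold d; ring).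
    rewrite exp_plus in P2.
    assert (Ed : exp (d * s) * exp (d * (- s)) = 1).
    { rewrite <- exp_plus. replace (d * s + d * - s) with 0 by ring. apply exp_0. }
    assert (Hsq := exp_sq (- s) d ltac:(lra) Hd).
    set (E1 := exp (lam * s)) in *. assert (0 < E1) by apply exp_pos.
    set (E2 := exp (d * s)) in *. assert (0 < E2) by apply exp_pos.
    set (E3 := exp (d * - s)) in *.
    set (X := (- (s + sig)) ^ m) in *. set (Y := (- s) ^ n) in *.
    assert (0 <= Y) by (unfold Y; apply pow_le; lra).
    set (u := - s) in *.
    assert (Hu : q <= u) by (unfold u; lra).
    assert (S1 : 12 * b <= K * d ^ 2 * u).
    { rewrite <- Hq. rewrite (Rmult_comm q). apply Rmult_le_compat_l; lra. }
    assert (S2 : 3 * b * u <= K * (d * u / 2) ^ 2).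
    { replace (K * (d * u / 2) ^ 2) with ((K * d ^ 2 * u) * (u / 4)) by (simpl; field).
      replace (3 * b * u) with (12 * b * (u / 4)) by field.
      apply Rmult_le_compat_r; lra. }
    assert (S3 : K * (d * u / 2) ^ 2 <= K * E3) by (apply Rmult_le_compat_l; lra).
    assert (S4 : 3 * b * Y <= 3 * b * u) by (apply Rmult_le_compat_l; lra).
    assert (Key : 3 * b * Y * E2 <= K).
    { apply Rle_trans with (3 * b * u * E2). apply Rmult_le_compat_r; lra.
      apply Rle_trans with (K * E3 * E2). apply Rmult_le_compat_r; lra.
      replace (K * E3 * E2) with (K * (E2 * E3)) by ring. rewrite Ed. lra. }
    assert (Key2 : K <= a * X * L).
    { replace (a * X * L) with (K + K * (X - 1)) by (unfold K; ring).
      assert (0 <= K * (X - 1)) by (apply Rmult_le_pos; lra). lra. }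
    assert (F : 3 / 2 * (b * Y * (E1 * E2)) <= 1 / 2 * (a * X * (E1 * L))).
    { replace (3 / 2 * (b * Y * (E1 * E2))) with (E1 / 2 * (3 * b * Y * E2)) by field.
      replace (1 / 2 * (a * X * (E1 * L))) with (E1 / 2 * (a * X * L)) by field.
      apply Rmult_le_compat_l; lra. }
    lra.
  - subst mu.
    set (q := 3 * b / K).
    assert (Hq : q * K = 3 * b) by (unfold q; field; lra).
    exists (Rmin (Rmin (M1 - sig) M2) (- sig - q - 1)).
    intros s Hs.
    assert (R1 := Rmin_l (Rmin (M1 - sig) M2) (- sig - q - 1)).
    assert (R2 := Rmin_r (Rmin (M1 - sig) M2) (- sig - q - 1)).
    assert (R3 := Rmin_l (M1 - sig) M2). assert (R4 := Rmin_r (M1 - sig) M2).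
    destruct (HM1 (s + sig) ltac:(lra)) as [_ [P1 _]].
    destruct (HM2 s ltac:(lra)) as [_ [_ P2]].
    rewrite Rmult_plus_distr_l, exp_plus in P1. fold L in P1. simpl in P1, P2.
    set (E1 := exp (lam * s)) in *. assert (0 < E1) by apply exp_pos.
    assert (S1 : 3 * b <= a * (- (s + sig)) * L).
    { rewrite <- Hq. replace (a * (- (s + sig)) * L) with (- (s + sig) * K) by (unfold K; ring).
      apply Rmult_le_compat_r; lra. }
    assert (F : 3 / 2 * (b * 1 * E1) <= 1 / 2 * (a * (- (s + sig) * 1) * (E1 * L))).
    { replace (3 / 2 * (b * 1 * E1)) with (E1 / 2 * (3 * b)) by field.
      replace (1 / 2 * (a * (- (s + sig) * 1) * (E1 * L))) with (E1 / 2 * (a * (- (s + sig)) * L)) by field.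
      apply Rmult_le_compat_l; lra. }
    lra.
Qed.

Theorem mainTheorem5 (h : R) (g : R -> R) (kappa c : R) (phi psi : R -> R)
    (a b lam mu : R) (m n : nat) :
  0 < h -> hypH g kappa -> 0 < c ->
  wavefront g kappa h c phi -> wavefront g kappa h c psi ->
  0 < a -> 0 < b -> 0 < lam -> 0 < mu ->
  (m = 0%nat \/ m = 1%nat) -> (n = 0%nat \/ n = 1%nat) ->
  asympt_minus_infty phi a lam m -> asympt_minus_infty psi b mu n ->
  lam = mu /\ m = n.
Proof.
  intros Hh HH Hc W1 W2 Ha Hb Hl Hmu Hm Hn A1 A2.
  destruct (Rtotal_order lam mu) as [Hlt|[Heq|Hgt]].
  - exfalso. apply (sliding g kappa h c phi psi Hh Hc HH W1 W2).
    apply (faster phi psi a b lam mu m n Ha Hb Hl Hm Hn A1 A2). left; auto.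
  - split; auto. subst mu.
    destruct Hm as [-> | ->]; destruct Hn as [-> | ->]; auto; exfalso.
    + apply (sliding g kappa h c psi phi Hh Hc HH W2 W1).
      apply (faster psi phi b a lam lam 1%nat 0%nat Hb Ha Hl ltac:(auto) ltac:(auto) A2 A1).
      right; auto.
    + apply (sliding g kappa h c phi psi Hh Hc HH W1 W2).
      apply (faster phi psi a b lam lam 1%nat 0%nat Ha Hb Hl ltac:(auto) ltac:(auto) A1 A2).
      right; auto.
  - exfalso. apply (sliding g kappa h c psi phi Hh Hc HH W2 W1).
    apply (faster psi phi b a mu lam n m Hb Ha Hmu Hn Hm A2 A1). left; auto.
Qed.
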